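(* Let $G$ be a bipartite graph and let $M$ be a maximum matching in $G$. Then $\alpha(G-M)\le \mathrm{diss}(G)\le \frac{4}{3}\alpha(G-M)$.
   Context: All graphs are finite, simple and undirected. A set $I$ of vertices of a graph $G$ is a dissociation set if the induced subgraph $G[I]$ has maximum degree at most $1$; $\mathrm{diss}(G)$ is the maximum order of a dissociation set in $G$. $\alpha(H)$ denotes the independence number of $H$. For a set $M$ of edges, $G-M$ is the graph on $V(G)$ with edge set $E(G)\setminus M$. *)

(* Defs.v *)
From mathcomp Require Import all_boot.
Set Implicit Arguments. Unset Strict Implicit. Unset Printing Implicit Defensive.

Definition simple_graph (T : finType) (e : rel T) : Prop :=
  symmetric e /\ irreflexive e.

Definition bipartite (T : finType) (e : rel T) : Prop :=
  exists c : T -> bool, forall x y, e x y -> c x != c y.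

(* A set of edges M is represented by its symmetric relation m on vertices.
   m is a matching of e: m is symmetric, m is a subrelation of e,
   and each vertex has at most one m-neighbour. *)
Definition matching (T : finType) (e m : rel T) : Prop :=
  symmetric m /\ (forall x y, m x y -> e x y) /\
  (forall x y z, m x y -> m x z -> y = z).

(* number of edges of a symmetric irreflexive relation: ordered pairs / 2 *)
Definition nedges (T : finType) (m : rel T) : nat :=
  #|[set p : T * T | m p.1 p.2]| %/ 2.

Definition maximum_matching (T : finType) (e m : rel T) : Prop :=
  matching e m /\ forall m' : rel T, matching e m' -> nedges m' <= nedges m.

Definition edge_del (T : finType) (e m : rel T) : rel T :=
  fun x y => e x y && ~~ m x y.

Definition independent (T : finType) (e : rel T) (I : {set T}) : bool :=
  [forall x in I, forall y in I, ~~ e x y].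

Definition dissociation (T : finType) (e : rel T) (I : {set T}) : bool :=
  [forall x in I, #|[set y in I | e x y]| <= 1].

Definition alpha (T : finType) (e : rel T) : nat :=
  \max_(I : {set T} | independent e I) #|I|.

Definition diss (T : finType) (e : rel T) : nat :=
  \max_(I : {set T} | dissociation e I) #|I|.

(* Main.v *)
Require Import Defs.
From mathcomp Require Import all_boot perm zify.
Set Implicit Arguments. Unset Strict Implicit. Unset Printing Implicit Defensive.

Definition free (T : finType) (M : rel T) x := [forall y, ~~ M x y].
Definition pairs (T : finType) (M : rel T) : {set T * T} := [set p : T * T | M p.1 p.2].
Definition altR (T : finType) (e : rel T) (c : T -> bool) (M : rel T) : rel T :=
  fun x y => (c x && e x y && ~~ M x y) || (~~ c x && M x y).

Lemma freeP (T : finType) (M : rel T) x : free M x -> forall y, M x y = false.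
Proof. by move/forallP=> h y; apply/negbTE. Qed.

Lemma augment1 (T : finType) (e M : rel T) a b :
  symmetric e -> matching e M -> free M a -> free M b -> e a b -> a != b ->
  exists M', matching e M' /\ #|pairs M| + 2 <= #|pairs M'|.
Proof.
move=> esym [Msym [Me Mu]] fa fb eab nab.
have fa' := freeP fa; have fb' := freeP fb.
pose M' := fun x y => [|| M x y, (x == a) && (y == b) | (x == b) && (y == a)].
exists M'; split; first split.
- move=> x y; rewrite /M' Msym.
  by case: (M y x); case: (x == a); case: (y == b); case: (x == b); case: (y == a).
- split.
  + move=> x y; rewrite /M'; case/or3P => [/Me //|/andP[/eqP-> /eqP->] //|/andP[/eqP-> /eqP->]].
    by rewrite esym.
  + move=> x y z; rewrite /M'.
    have nba : b != a by rewrite eq_sym.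
    case/or3P => [Mxy|/andP[/eqP ex /eqP ey]|/andP[/eqP ex /eqP ey]];
    case/or3P => [Mxz|/andP[/eqP ex' /eqP ez]|/andP[/eqP ex' /eqP ez]].
    * exact: Mu Mxy Mxz.
    * by move: Mxy; rewrite ex' fa'.
    * by move: Mxy; rewrite ex' fb'.
    * by move: Mxz; rewrite ex fa'.
    * by rewrite ey ez.
    * by move: nab; rewrite -ex -ex' eqxx.
    * by move: Mxz; rewrite ex fb'.
    * by move: nab; rewrite -ex -ex' eqxx.
    * by rewrite ey ez.
have -> : pairs M' = (a, b) |: ((b, a) |: pairs M).
  apply/setP => [[x y]]; rewrite !inE /M' /= !xpair_eqE.
  by case: (M x y); case: (_ == _); case: (_ == _); case: (_ == _); case: (_ == _).
rewrite !cardsU1 !inE /= fa' fb' /= !xpair_eqE.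
by rewrite (negbTE nab) /= add1n addnC.
Qed.

Lemma swap_match (T : finType) (e M : rel T) a b1 a1 :
  symmetric e -> matching e M -> free M a -> M b1 a1 -> e a b1 ->
  a1 != b1 -> b1 != a ->
  exists M'', [/\ matching e M'', free M'' a1, #|pairs M''| = #|pairs M|,
    (forall x y, x != a -> x != b1 -> y != a -> y != b1 -> M'' x y = M x y) &
    (forall x, x != a -> x != a1 -> free M x -> free M'' x)].
Proof.
move=> esym [Msym [Me Mu]] fa Mba eab na1b nb1a.
have fa' := freeP fa.
have Mab : M a1 b1 by rewrite Msym.
have naa1 : a != a1.
  by apply/eqP => ea; move: Mab; rewrite -ea fa'.
have mate1 : forall y, M a1 y -> y = b1 by move=> y h; exact: Mu h Mab.
have mateb : forall y, M y a1 -> y = b1 by move=> y; rewrite Msym => /mate1.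
pose t := tperm a a1.
have tK : involutive t by exact: tpermK.
have tinj : injective t by exact: can_inj tK.
have tb1 : t b1 = b1 by rewrite tpermD // eq_sym.
pose M'' := fun x y => M (t x) (t y).
have fa'' : forall y, M y a = false by move=> y; rewrite Msym fa'.
exists M''; split.
- split; first by move=> x y; rewrite /M'' Msym.
  split; last by move=> x y z h1 h2; apply: tinj; exact: Mu h1 h2.
  move=> x y; rewrite /M''.
  have [-> | nxa] := eqVneq x a.
    rewrite /t tpermL => /mate1 ty; have -> : y = b1.
      by rewrite -(tK y) ty tb1.
    by [].
  have [-> | nxa1] := eqVneq x a1.
    by rewrite /t tpermR fa'.
  rewrite /t (@tpermD _ a a1 x); try by rewrite eq_sym.
  have [-> | nya] := eqVneq y a.
    rewrite tpermL => /mateb ->; by rewrite esym.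
  have [-> | nya1] := eqVneq y a1.
    by rewrite tpermR fa''.
  by rewrite tpermD 1?eq_sym // => /Me.
- by apply/forallP => y; rewrite /M'' /t tpermR fa'.
- pose f := fun p : T * T => (t p.1, t p.2).
  have finj : injective f.
    by move=> [x1 y1] [x2 y2] [/tinj -> /tinj ->].
  have -> : pairs M'' = f @^-1: pairs M by apply/setP => p; rewrite !inE.
  exact: card_preimset.
- move=> x y nxa nxb nya nyb; rewrite /M''.
  have [exa1|nxa1] := eqVneq x a1.
    rewrite exa1 /t tpermR fa'; case h: (M a1 y) => //.
    by move: (mate1 _ h) nyb => ->; rewrite eqxx.
  have [eya1|nya1] := eqVneq y a1.
    rewrite eya1 /t tpermR fa''; case h: (M x a1) => //.
    by move: (mateb _ h) nxb => ->; rewrite eqxx.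
  by rewrite /t !tpermD 1?eq_sym // eq_sym.
- move=> x nxa nxa1 fx; apply/forallP => y; rewrite /M'' /t tpermD 1?eq_sym //.
  by rewrite (freeP fx).
Qed.

Lemma aug (T : finType) (e : rel T) (c : T -> bool) n :
  symmetric e -> (forall x y, e x y -> c x != c y) ->
  forall (M : rel T) a p, size p <= n -> matching e M -> free M a -> c a ->
  path (altR e c M) a p -> uniq (a :: p) -> ~~ c (last a p) ->
  free M (last a p) ->
  exists M', matching e M' /\ #|pairs M| + 2 <= #|pairs M'|.
Proof.
move=> esym bip; elim: n => [|n IH] M a [|b1 p] //=; try by move=> _ _ _ ->.
move=> sz mM fa ca /andP[hab hp] /andP[ap up] nc fl.
have eab : e a b1 by move: hab; rewrite /altR ca /= => /orP[/andP[]|].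
have cb1 : c b1 = false by move: (bip _ _ eab); rewrite ca; case: (c b1).
case: p sz hp ap up nc fl => [|a1 p] sz hp ap up nc fl.
  apply: (augment1 esym mM fa fl eab).
  by apply/eqP => eb; move: cb1; rewrite /= in eb; rewrite -eb ca.
move: hp => /= /andP[hba hp].
have Mba : M b1 a1 by move: hba; rewrite /altR cb1.
have [Msym [Me Mu]] := mM.
have ca1 : c a1 by move: (bip _ _ (Me _ _ Mba)); rewrite cb1; case: (c a1).
have na1b : a1 != b1 by apply/eqP => eb; move: cb1; rewrite -eb ca1.
have nb1a : b1 != a by apply/eqP => eb; move: cb1; rewrite eb ca.
have [M'' [mM'' fa1 cardM eqM ffree]] := swap_match esym mM fa Mba eab na1b nb1a.
move: up => /= /andP[nb1 /andP[na1 up]].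
move: ap; rewrite !inE !negb_or => /and3P[_ naa1 nap].
have [M' [mM' cM']] : exists M', matching e M' /\ #|pairs M''| + 2 <= #|pairs M'|.
  apply: (IH M'' a1 p) => //.
  - by move: sz => /=; rewrite !ltnS => /ltnW.
  - rewrite -(@eq_in_path _ [pred x | (x != a) && (x != b1)] (altR e c M)) //.
      move=> x y /andP[nxa nxb] /andP[nya nyb]; by rewrite /altR eqM.
    apply/andP; split; first by rewrite /= eq_sym naa1 na1b.
    apply/allP => x xp /=.
    apply/andP; split; apply/negP => /eqP ex; subst x.
      by rewrite xp in nap.
    by move: nb1; rewrite !inE xp orbT.
  - by rewrite /= na1.
  - have hl : last a1 p \in a1 :: p by exact: mem_last.
    apply: ffree => //.
    + apply/negP => /eqP el; move: hl; rewrite el !inE.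
      by rewrite (negbTE naa1) (negbTE nap).
    + by apply/negP => /eqP el; move: nc; rewrite /= el ca1.
by exists M'; rewrite -cardM.
Qed.

Lemma indepP (T : finType) (r : rel T) (I : {set T}) :
  (forall x y, x \in I -> y \in I -> ~~ r x y) -> independent r I.
Proof.
move=> h; apply/forallP => x; apply/implyP => xI; apply/forallP => y.
by apply/implyP => yI; apply: h.
Qed.

Lemma indepE (T : finType) (r : rel T) (I : {set T}) x y :
  independent r I -> x \in I -> y \in I -> ~~ r x y.
Proof.
by move=> /forallP /(_ x) /implyP h xI yI; move: (h xI) => /forallP /(_ y) /implyP; apply.
Qed.

Lemma alpha_ge (T : finType) (r : rel T) (I : {set T}) :
  independent r I -> #|I| <= alpha r.
Proof. by move=> h; rewrite /alpha; apply: (leq_bigmax_cond I h). Qed.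

Definition mt (T : finType) (m : rel T) x := odflt x [pick y | m x y].

Lemma mtP (T : finType) (m : rel T) x y : m x y -> m x (mt m x).
Proof. by move=> hxy; rewrite /mt; case: pickP => [z hz|h] //=; rewrite h in hxy. Qed.

Lemma mtE (T : finType) (e m : rel T) x y : matching e m -> m x y -> mt m x = y.
Proof. by move=> [_ [_ mu]] hxy; apply: mu (mtP hxy) hxy. Qed.

Lemma notfree (T : finType) (m : rel T) x : ~~ free m x -> m x (mt m x).
Proof. by rewrite /free negb_forall => /existsP[y]; rewrite negbK => /mtP. Qed.

Lemma count_lemma (T : finType) (D P K : {set T}) (f : T -> T) :
  P \subset D ->
  {in (D :\: P) :\: K &, injective f} ->
  {in P :\: K &, injective f} ->
  (forall x, x \in (D :\: P) :\: K -> f x \in K /\ f x \notin D) ->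
  (forall x, x \in P :\: K -> f x \in P :&: K) ->
  2 * #|D :\: P| + #|P| <= 2 * #|K|.
Proof.
move=> PD injX injY HX HY.
have e1 : #|D :&: K| = #|P :&: K| + #|(D :\: P) :&: K|.
  have s1 : (D :&: K) :&: P = P :&: K.
    apply/setP => x; rewrite !inE.
    by have := subsetP PD x; case: (x \in P); case: (x \in D); case: (x \in K) => // /(_ isT).
  have s2 : (D :&: K) :\: P = (D :\: P) :&: K.
    by apply/setP => x; rewrite !inE; case: (x \in P); case: (x \in D); case: (x \in K).
  by rewrite -(cardsID P (D :&: K)) s1 s2.
have e2 := esym (cardsID K (D :\: P)).
have e3 := esym (cardsID K P).
have h1 : #|D :&: K| + #|f @: ((D :\: P) :\: K)| <= #|K|.
  have dis : (D :&: K) :&: (f @: ((D :\: P) :\: K)) = set0.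
    apply/setP => y; rewrite inE in_set0; apply/negP => /andP[yDK /imsetP[x xX ey]].
    have [_ nD] := HX x xX; by rewrite ey inE (negbTE nD) in yDK.
  rewrite -(subn0 (_ + _)) -(cards0 T) -dis -cardsU.
  apply: subset_leq_card; rewrite subUset subsetIr /=.
  by apply/subsetP => y /imsetP[x xX ->]; case: (HX x xX).
rewrite card_in_imset // in h1.
have h2 : #|P :\: K| <= #|P :&: K|.
  rewrite -(card_in_imset injY); apply: subset_leq_card.
  by apply/subsetP => y /imsetP[x xY ->]; exact: HY.
lia.
Qed.

Theorem mainTheorem2 (T : finType) (e m : rel T) :
  simple_graph e -> bipartite e -> maximum_matching e m ->
  alpha (edge_del e m) <= diss e /\ 3 * diss e <= 4 * alpha (edge_del e m).
Proof.
move=> [esym eirr] [c bip] [mM mmax].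
have [msym [me mu]] := mM.
have edsym : forall x y, edge_del e m x y = edge_del e m y x.
  by move=> x y; rewrite /edge_del esym msym.
split.
  apply/bigmax_leqP => I indI; apply: leq_bigmax_cond.
  apply/forallP => x; apply/implyP => xI.
  apply/card_le1_eqP => y z; rewrite !inE => /andP[yI exy] /andP[zI exz].
  have h1 := indepE indI xI yI; have h2 := indepE indI xI zI.
  move: h1 h2; rewrite /edge_del exy exz /= !negbK => mxy mxz.
  by rewrite (mu _ _ _ mxy mxz).
have [D dD ->] : exists2 D, dissociation e D & diss e = #|D|.
  have d0 : dissociation e set0 by apply/forallP => x; rewrite inE.
  rewrite /diss (bigmax_eq_arg set0 d0).
  by case: arg_maxnP => // D dD _; exists D.
pose R := altR e c m.
pose Z := [set y | [exists a0, [&& c a0, free m a0 & connect R a0 y]]].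
have Zstep : forall x y, x \in Z -> R x y -> y \in Z.
  move=> x y; rewrite !inE => /existsP[a0 /and3P[ca fa cx]] rxy.
  apply/existsP; exists a0; rewrite ca fa /=.
  exact: connect_trans cx (connect1 rxy).
have Zfree : forall a, c a -> free m a -> a \in Z.
  by move=> a ca fa; rewrite inE; apply/existsP; exists a; rewrite ca fa connect0.
have Zberge : forall y, y \in Z -> ~~ c y -> free m y -> False.
  move=> y; rewrite inE => /existsP[a0 /and3P[ca fa /connectP[p hp ->]]] ncy fy.
  case: (shortenP hp) ncy fy => p' hp' up' _ ncy fy.
  have [M' [mM' cM']] := aug (n := size p') esym bip (leqnn _) mM fa ca hp' up' ncy fy.
  move: (mmax M' mM'); rewrite /nedges -/(pairs M') -/(pairs m).
  have h2 := leq_div2r 2 cM'; rewrite divnDr // divnn /= in h2.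
  move=> h3; have := leq_trans h2 h3; rewrite addn1 ltnn //.
pose K := [set x | (c x && (x \in Z)) || (~~ c x && (x \notin Z))].
have inK : forall x, (x \in K) = ((c x && (x \in Z)) || (~~ c x && (x \notin Z))).
  by move=> x; rewrite /K in_set.
have ZK : forall x y, c x -> x \in Z -> edge_del e m x y -> y \in Z.
  move=> x y cx xZ; rewrite /edge_del => /andP[exy nm].
  by apply: (Zstep x) => //; rewrite /R /altR cx exy nm.
have indK : independent (edge_del e m) K.
  apply: indepP => x y; rewrite !inK => hx hy; apply/negP => ed.
  have /bip cxy : e x y by case/andP: ed.
  case cx: (c x) cxy hx => /= cy hx.
    have cy' : c y = false by move: cy; case: (c y).
    move: hy hx; rewrite cy' /= !orbF => hy hx.
    by rewrite (ZK x y cx hx ed) in hy.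
  have cy' : c y by move: cy; case: (c y).
  move: hy hx; rewrite cy' /= !orbF => hy hx.
  have ed' : edge_del e m y x by rewrite edsym.
  by rewrite (ZK y x cy' hy ed') in hx.
pose f := mt m.
have mtK : forall x, m x (f x) -> f (f x) = x.
  by move=> x h; apply: (mtE mM); rewrite msym.
have finj : forall x y, m x (f x) -> m y (f y) -> f x = f y -> x = y.
  move=> x y hx hy exy; apply: (mu (f x)); first by rewrite msym.
  by rewrite exy msym.
have notK : forall x, x \notin K -> m x (f x) /\ f x \in K.
  move=> x; rewrite inK; case cx: (c x) => /=; rewrite ?orbF ?negbK.
    move=> xZ; have mx : m x (f x).
      by apply: notfree; apply/negP => fx; rewrite (Zfree x cx fx) in xZ.
    have cfx : c (f x) = false by move: (bip _ _ (me _ _ mx)); rewrite cx; case: (c (f x)).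
    split=> //; rewrite inK cfx /=; apply/negP => fZ.
    by rewrite (Zstep (f x) x fZ) // /R /altR cfx /= msym in xZ.
  move=> xZ; have mx : m x (f x).
    by apply: notfree; apply/negP => fx; apply: (Zberge x xZ) => //; rewrite cx.
  have cfx : c (f x) by move: (bip _ _ (me _ _ mx)); rewrite cx; case: (c (f x)).
  split=> //; rewrite inK cfx /= orbF; apply: (Zstep x) => //.
  by rewrite /R /altR cx /=.
pose P := [set x in D | m x (f x) && (f x \in D)].
pose Q := [set u in D | c u && [exists v in D, edge_del e m u v]].
pose Rs := [set u in D | ~~ c u && [exists v in D, edge_del e m u v]].
have PD : P \subset D by apply/subsetP => x; rewrite inE => /andP[].
have notP : forall u v, u \in D -> v \in D -> edge_del e m u v -> u \notin P.
  move=> u v uD vD /andP[euv nm]; rewrite inE uD /=; apply/negP => /andP[mu' fuD].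
  have := forallP dD u; rewrite uD /= => /card_le1_eqP h.
  have : v = f u.
    by apply: h; rewrite inE ?vD ?fuD //= me.
  by move=> ev; move: nm; rewrite ev mu'.
have QP : Q \subset D :\: P.
  apply/subsetP => u; rewrite inE => /andP[uD /andP[_ /existsP[v /andP[vD ed]]]].
  by rewrite in_setD uD (notP u v uD vD ed).
have RP : Rs \subset D :\: P.
  apply/subsetP => u; rewrite inE => /andP[uD /andP[_ /existsP[v /andP[vD ed]]]].
  by rewrite in_setD uD (notP u v uD vD ed).
have QR0 : Q :&: Rs = set0.
  by apply/setP => x; rewrite !inE; case: (c x); rewrite /= ?andbF.
have QR : #|Q| + #|Rs| <= #|D :\: P|.
  have := cardsU Q Rs; rewrite QR0 cards0 subn0 => <-.
  by apply: subset_leq_card; rewrite subUset QP RP.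
have indQ : independent (edge_del e m) (D :\: Q).
  apply: indepP => x y; rewrite !in_setD => /andP[xQ xD] /andP[yQ yD]; apply/negP => ed.
  have /bip cxy : e x y by case/andP: ed.
  case cx: (c x) cxy => cy.
    move/negP: xQ; apply; rewrite inE xD cx /=.
    by apply/existsP; exists y; rewrite yD ed.
  have cy' : c y by move: cy; case: (c y).
  move/negP: yQ; apply; rewrite inE yD cy' /=.
  by apply/existsP; exists x; rewrite xD edsym ed.
have indR : independent (edge_del e m) (D :\: Rs).
  apply: indepP => x y; rewrite !in_setD => /andP[xQ xD] /andP[yQ yD]; apply/negP => ed.
  have /bip cxy : e x y by case/andP: ed.
  case cx: (c x) cxy => cy.
    have cy' : c y = false by move: cy; case: (c y).
    move/negP: yQ; apply; rewrite inE yD cy' /=.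
    by apply/existsP; exists x; rewrite xD edsym ed.
  move/negP: xQ; apply; rewrite inE xD cx /=.
  by apply/existsP; exists y; rewrite yD ed.
have injX : {in (D :\: P) :\: K &, injective f}.
  move=> x y; rewrite !in_setD => /andP[xK _] /andP[yK _].
  by apply: finj; [exact (notK x xK).1 | exact (notK y yK).1].
have injY : {in P :\: K &, injective f}.
  move=> x y; rewrite !in_setD => /andP[xK _] /andP[yK _].
  by apply: finj; [exact (notK x xK).1 | exact (notK y yK).1].
have HX : forall x, x \in (D :\: P) :\: K -> f x \in K /\ f x \notin D.
  move=> x; rewrite !in_setD => /andP[xK /andP[xP xD]]; have [mx fK] := notK x xK.
  by split=> //; apply/negP => fD; move: xP; rewrite inE xD mx fD.
have HY : forall x, x \in P :\: K -> f x \in P :&: K.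
  move=> x; rewrite in_setD => /andP[xK xP]; have [mx fK] := notK x xK.
  rewrite in_setI fK andbT; move: (xP); rewrite inE => /and3P[xD _ fD].
  by rewrite inE fD (mtK x mx) xD andbT msym.
have cK := count_lemma PD injX injY HX HY.
have QD : Q \subset D by apply: subset_trans QP (subsetDl _ _).
have RD : Rs \subset D by apply: subset_trans RP (subsetDl _ _).
have eD : #|D| = #|D :\: P| + #|P| by rewrite -(cardsID P D) (setIidPr PD) addnC.
have eQ : #|D :\: Q| + #|Q| = #|D| by rewrite -(cardsID Q D) (setIidPr QD) addnC.
have eR : #|D :\: Rs| + #|Rs| = #|D| by rewrite -(cardsID Rs D) (setIidPr RD) addnC.
have a1 := alpha_ge indK; have a2 := alpha_ge indQ; have a3 := alpha_ge indR.
lia.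
Qed.
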